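(* Let $(\mathcal{F}_\alpha)_{\alpha<\omega_1}$ and $(\mathcal{G}_\alpha)_{\alpha<\omega_1}$ be transfinite families defined by two approximating families. Let $\mathcal{A}\subset[\mathbb{N}]^{<\infty}$ be hereditary, $P\subset\mathbb{N}$ infinite and $\alpha<\omega_1$. Then $\mathcal{A}$ is $\alpha$-large on $P$ with respect to $(\mathcal{F}_\beta)$ if and only if $\mathcal{A}$ is $\alpha$-large on $P$ with respect to $(\mathcal{G}_\beta)$.
   Context: An approximating family assigns to each countable limit ordinal $\alpha$ finite sets $A_n(\alpha)\subset[0,\alpha)$, $n\in\mathbb{N}$, with $A_n(\alpha)\subset A_{n+1}(\alpha)$ and $\lim_n\max A_n(\alpha)=\alpha$. The associated transfinite family: $\mathcal{F}_0=\{\emptyset\}$; $\mathcal{F}_{\beta+1}=\{\{n\}\cup E:n\in\mathbb{N},E\in\mathcal{F}_\beta\}\cup\{\emptyset\}$; for limit $\alpha$, $\mathcal{F}_\alpha=\{\emptyset\}\cup\{E\ne\emptyset:E\in\bigcup_{\beta\in A_{\min E}(\alpha)}\mathcal{F}_\beta\}$. For $N=\{n_1<n_2<\dots\}$, $\mathcal{F}^N=\{\{n_i:i\in E\}:E\in\mathcal{F}\}$. $\mathcal{A}$ is $\alpha$-large on $P$ with respect to $(\mathcal{F}_\beta)$ if for every infinite $M\subset P$ there is an infinite $N\subset M$ with $\mathcal{F}_\alpha^N\subset\mathcal{A}$. $[\mathbb{N}]^{<\infty}$ = finite subsets of $\mathbb{N}$; hereditary = closed under subsets. *)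

(* Defs.v *)
From Stdlib Require List.
From mathcomp Require Import all_boot.
From mathcomp Require Import finmap.
Set Implicit Arguments. Unset Strict Implicit. Unset Printing Implicit Defensive.
Open Scope fset_scope.

(* Countable ordinals: an abstract well-ordered type in which every element has
   countably many predecessors (i.e. a type order-isomorphic to an initial
   segment of omega_1).  Quantifying over all such types is equivalent to
   quantifying over alpha < omega_1. *)
Definition countable_wellorder (O : Type) (lt : O -> O -> Prop) : Prop :=
  well_founded lt /\
  (forall a b c, lt a b -> lt b c -> lt a c) /\
  (forall a b, lt a b \/ a = b \/ lt b a) /\
  (forall a, exists f : nat -> O, forall b, lt b a -> exists n, f n = b).

Definition is_zero (O : Type) (lt : O -> O -> Prop) (a : O) : Prop :=
  forall b, ~ lt b a.

Definition is_succ_of (O : Type) (lt : O -> O -> Prop) (a b : O) : Prop :=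
  lt b a /\ forall c, lt b c -> lt c a -> False.

Definition is_limit (O : Type) (lt : O -> O -> Prop) (a : O) : Prop :=
  (exists b, lt b a) /\ (forall b, lt b a -> exists c, lt b c /\ lt c a).

Definition approximating_family (O : Type) (lt : O -> O -> Prop)
    (A : O -> nat -> seq O) : Prop :=
  forall a, is_limit lt a ->
    (forall n b, List.In b (A a n) -> lt b a) /\
    (forall n b, List.In b (A a n) -> List.In b (A a n.+1)) /\
    (forall b, lt b a -> exists N, forall n, N <= n ->
        exists c, List.In c (A a n) /\ lt b c).

Definition transfinite_family (O : Type) (lt : O -> O -> Prop)
    (A : O -> nat -> seq O) (F : O -> {fset nat} -> Prop) : Prop :=
  (forall a, is_zero lt a -> forall E, F a E <-> E = fset0) /\
  (forall a b, is_succ_of lt a b -> forall E,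
      F a E <-> (E = fset0 \/ exists n E', F b E' /\ E = n |` E')) /\
  (forall a, is_limit lt a -> forall E,
      F a E <-> (E = fset0 \/
        exists m, m \in E /\ (forall x, x \in E -> m <= x) /\
          exists b, List.In b (A a m) /\ F b E)).

Definition hereditary (Acal : {fset nat} -> Prop) : Prop :=
  forall E E', Acal E -> E' `<=` E -> Acal E'.

Definition infinite_set (P : nat -> Prop) : Prop :=
  forall k, exists n, k <= n /\ P n.

(* Infinite subsets of nat are given by their increasing enumerations. *)
Definition strictly_increasing (m : nat -> nat) : Prop :=
  forall i j, i < j -> m i < m j.

Definition spread (n : nat -> nat) (F : {fset nat} -> Prop) (E : {fset nat}) : Prop :=
  exists E0, F E0 /\ E = [fset n i | i in E0].

Definition large (O : Type) (F : O -> {fset nat} -> Prop) (a : O)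
    (Acal : {fset nat} -> Prop) (P : nat -> Prop) : Prop :=
  forall m : nat -> nat, strictly_increasing m -> (forall i, P (m i)) ->
    exists n : nat -> nat, strictly_increasing n /\
      (forall i, exists j, n i = m j) /\
      (forall E, spread n (F a) E -> Acal E).

(* Main.v *)
Require Import Defs.
From mathcomp Require Import all_boot.
From mathcomp Require Import finmap.
From Stdlib Require Import Classical ClassicalEpsilon.
Set Implicit Arguments. Unset Strict Implicit. Unset Printing Implicit Defensive.

Lemma ord_cases (O : Type) (lt : O -> O -> Prop) a :
  is_zero lt a \/ (exists b, is_succ_of lt a b) \/ is_limit lt a.
Proof.
case: (classic (exists b, lt b a)) => [[b0 hb0]|h]; last first.
  by left => b hb; apply: h; exists b.
case: (classic (exists b, is_succ_of lt a b)) => [hs|hs]; first by right; left.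
right; right; split; first by exists b0.
move=> b hb; apply: NNPP => hc; apply: hs; exists b; split => // c h1 h2.
by apply: hc; exists c.
Qed.

Lemma In_mono (O : Type) (lt : O -> O -> Prop) A (hA : approximating_family lt A)
  a (ha : is_limit lt a) c N : List.In c (A a N) -> forall n, (N <= n)%N -> List.In c (A a n).
Proof.
move=> hc; elim=> [|n IH]; first by rewrite leqn0 => /eqP <-.
rewrite leq_eqVlt => /orP [/eqP <- //|hlt].
exact: ((hA a ha).2.1 n c (IH hlt)).
Qed.

Lemma sinc_mono k : strictly_increasing k -> forall m x, (m <= x)%N -> (k m <= k x)%N.
Proof.
move=> hk m x; rewrite leq_eqVlt => /orP [/eqP-> //|h]; exact/ltnW/hk.
Qed.

Lemma imfset_empty (k : nat -> nat) : [fset k i | i in (fset0 : {fset nat})] = fset0.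
Proof.
apply/fsetP => y; rewrite inE; apply/imfsetP => [[x]]; by rewrite inE.
Qed.

Lemma imfset_comp (f g : nat -> nat) (E : {fset nat}) :
  [fset f (g i) | i in E] = [fset f i | i in [fset g i | i in E]].
Proof.
apply/fsetP => y; apply/imfsetP/imfsetP => [[x hx ->]|[z /imfsetP [x hx ->] ->]].
  by exists (g x) => //; apply: in_imfset.
by exists x.
Qed.

Lemma sumn_ge (O : Type) (f : O -> nat) (l : seq O) b :
  List.In b l -> (f b <= sumn (map f l))%N.
Proof.
elim: l => [//|x l IH] /= [->|h]; first exact: leq_addr.
exact: leq_trans (IH h) (leq_addl _ _).
Qed.

Lemma lemL (O : Type) (lt : O -> O -> Prop) (hO : countable_wellorder lt) A F
  (hA : approximating_family lt A) (hF : transfinite_family lt A F) :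
  forall g b, lt b g -> exists p, forall E, F b E ->
     (forall x, x \in E -> (p <= x)%N) -> F g E.
Proof.
have [wf [tr [tri _]]] := hO.
have [hz [hs hl]] := hF.
elim/(well_founded_ind wf) => g IH b hbg.
case: (ord_cases lt g) => [hzg|[[d hd]|hlg]].
- by case: (hzg b).
- have sub : forall E, F d E -> F g E.
    move=> E hE; apply/(hs _ _ hd).
    case: (E =P fset0) => [->|/eqP/fset0Pn [x hx]]; first by left.
    right; exists x, E; split => //; apply/fsetP => y; rewrite !inE.
    by case: (y =P x) => // ->; rewrite hx.
  case: (tri b d) => [hbd|[hbd|hdb]].
  + have [p hp] := IH d hd.1 b hbd. exists p => E hE hEp; exact/sub/hp.
  + by subst; exists 0 => E hE _; exact: sub.
  + by case: (hd.2 b hdb hbg).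
- have [_ [hinc hconv]] := hA g hlg.
  have [N hN] := hconv b hbg.
  have [c [hc hbc]] := hN N (leqnn N).
  have hcg := (hA g hlg).1 N c hc.
  have [p hp] := IH c hcg b hbc.
  exists (maxn p N) => E hE hEp.
  apply/(hl g hlg); case: (E =P fset0) => [->|/eqP/fset0Pn [x hx]]; first by left.
  right.
  have ex : exists n, (fun n => n \in E) n by exists x.
  case: (ex_minnP ex) => m hm hmin.
  exists m; split => //; split => //.
  exists c; split.
    apply: (In_mono hA hlg hc).
    by have := hEp m hm; rewrite geq_max => /andP [].
  apply: hp => // y hy.
  by have := hEp y hy; rewrite geq_max => /andP [].
Qed.

Lemma claim (O : Type) (lt : O -> O -> Prop) (hO : countable_wellorder lt)
  AF AG (hAF : approximating_family lt AF) (hAG : approximating_family lt AG)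
  F G (hF : transfinite_family lt AF F) (hG : transfinite_family lt AG G) :
  forall a, exists k0 : nat -> nat, forall k, strictly_increasing k ->
    forall E0, G a E0 -> (forall x, x \in E0 -> (k0 x <= k x)%N) ->
    F a [fset k i | i in E0].
Proof.
have [wf _] := hO.
have [hzF [hsF hlF]] := hF.
have [hzG [hsG hlG]] := hG.
elim/(well_founded_ind wf) => a IH.
case: (ord_cases lt a) => [hza|[[d hd]|hla]].
- exists (fun _ => 0) => k hk E0 hE0 _.
  have -> : E0 = fset0 by apply/(hzG a hza).
  rewrite imfset_empty; exact/(hzF a hza).
- have [k0 hk0] := IH d hd.1.
  exists k0 => k hk E0 hE0 hb.
  apply/(hsF _ _ hd).
  move: hb; case/(hsG _ _ hd): hE0 => [->|[n [E' [hE' ->]]]] hb.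
    by left; rewrite imfset_empty.
  right; exists (k n), [fset k i | i in E']; split.
    apply: hk0 => // x hx; apply: hb; by rewrite in_fsetE hx orbT.
  by rewrite imfsetU1.
- pose Q b (t : (nat -> nat) * nat * O) := lt b a ->
     (forall k, strictly_increasing k -> forall E0, G b E0 ->
        (forall x, x \in E0 -> (t.1.1 x <= k x)%N) -> F b [fset k i | i in E0]) /\
     (forall n, (t.1.2 <= n)%N -> List.In t.2 (AF a n)) /\
     (forall E, F b E -> (forall x, x \in E -> (t.1.2 <= x)%N) -> F t.2 E).
  have H : forall b, exists t, Q b t.
    move=> b; rewrite /Q; case: (classic (lt b a)) => hba; last by exists (id, 0, b).
    have [kb hkb] := IH b hba.
    have [_ [hinc hconv]] := hAF a hla.
    have [N hN] := hconv b hba.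
    have [c [hc hbc]] := hN N (leqnn N).
    have hca := (hAF a hla).1 N c hc.
    have [p hp] := lemL hO hAF hF hbc.
    exists (kb, maxn p N, c) => _ /=; split => //; split.
      move=> n hn; apply: (In_mono hAF hla hc).
      by move: hn; rewrite geq_max => /andP [].
    move=> E hE hEp; apply: hp => // y hy.
    by have := hEp y hy; rewrite geq_max => /andP [].
  pose ch b := proj1_sig (constructive_indefinite_description _ (H b)).
  have chP b : Q b (ch b) := proj2_sig (constructive_indefinite_description _ (H b)).
  exists (fun i => sumn [seq addn ((ch b).1.1 i) (ch b).1.2 | b <- AG a i]).
  move=> k hk E0 hE0 hbnd.
  apply/(hlF a hla).
  case/(hlG a hla): hE0 => [->|[m [hm [hmin [b [hb hbE]]]]]].
    by left; rewrite imfset_empty.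
  right.
  have hba := (hAG a hla).1 m b hb.
  have [h1 [h2 h3]] := chP b hba.
  have hbx : forall x, x \in E0 -> ((ch b).1.1 x + (ch b).1.2 <= k x)%N.
    move=> x hx; apply: leq_trans (hbnd x hx).
    apply: (sumn_ge (fun b => addn ((ch b).1.1 x) (ch b).1.2)).
    exact: (In_mono hAG hla hb (hmin x hx)).
  exists (k m); split; first exact: in_imfset.
  split.
    move=> y /imfsetP [x hx ->]; exact: (sinc_mono hk (hmin x hx)).
  exists (ch b).2; split.
    apply: h2; apply: leq_trans (hbx m hm); exact: leq_addl.
  apply: h3.
    apply: h1 => // x hx; apply: leq_trans (hbx x hx); exact: leq_addr.
  move=> y /imfsetP [x hx ->]; apply: leq_trans (hbx x hx); exact: leq_addl.
Qed.

Lemma one_dir (O : Type) (lt : O -> O -> Prop) (hO : countable_wellorder lt)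
  AF AG (hAF : approximating_family lt AF) (hAG : approximating_family lt AG)
  F G (hF : transfinite_family lt AF F) (hG : transfinite_family lt AG G)
  Acal P a : large F a Acal P -> large G a Acal P.
Proof.
move=> hl m hm hPm.
have [n1 [hn1 [hsub hA]]] := hl m hm hPm.
have [k0 hk0] := claim hO hAF hAG hF hG a.
pose k := fix k i := if i is i'.+1 then (k i' + k0 i + 1)%N else k0 0.
have hk : strictly_increasing k.
  move=> i j; elim: j => [//|j IH]; rewrite ltnS leq_eqVlt => /orP [/eqP ->|h].
    by rewrite /= addn1 ltnS leq_addr.
  by rewrite /= addn1; apply: ltn_trans (IH h) _; rewrite ltnS leq_addr.
have hkk : forall i, (k0 i <= k i)%N.
  move=> [|j] /=; first by []; by rewrite addnAC leq_addl.
exists (fun i => n1 (k i)).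
split; [|split].
- by move=> i j hij; apply: hn1; apply: hk.
- by move=> i; apply: hsub.
- move=> E [E0 [hE0 ->]]; apply: hA; exists [fset k i | i in E0]; split.
    by apply: hk0 => // x _.
  exact: imfset_comp.
Qed.

Theorem corollary4p3 (O : Type) (lt : O -> O -> Prop)
  (hO : countable_wellorder lt)
  (AF AG : O -> nat -> seq O)
  (hAF : approximating_family lt AF) (hAG : approximating_family lt AG)
  (F G : O -> {fset nat} -> Prop)
  (hF : transfinite_family lt AF F) (hG : transfinite_family lt AG G)
  (Acal : {fset nat} -> Prop) (hA : hereditary Acal)
  (P : nat -> Prop) (hP : infinite_set P) (a : O) :
  large F a Acal P <-> large G a Acal P.
Proof.
split; [exact: (one_dir hO hAF hAG hF hG) | exact: (one_dir hO hAG hAF hG hF)].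
Qed.
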